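(* In the algebra $\mathcal O_q$ defined in the context, for all $n\in\mathbb N$: $$\mathcal W_{-n}=-(q-q^{-1})^{-1}\sum_{k=0}^n\sum_{\ell=0}^k\binom{k}{\ell}q^{k-2\ell}[2]_q^{-k-2}B_{(k-2\ell)\delta+\alpha_0}\tilde{\mathcal G}_{n-k},$$ $$\mathcal W_{n+1}=-(q-q^{-1})^{-1}\sum_{k=0}^n\sum_{\ell=0}^k\binom{k}{\ell}q^{2\ell-k}[2]_q^{-k-2}B_{(k-2\ell)\delta+\alpha_1}\tilde{\mathcal G}_{n-k}.$$
   Context: All algebras are associative and unital over a field $\mathbb F$; $q\in\mathbb F$ is nonzero and not a root of unity; $[n]_q=(q^n-q^{-n})/(q-q^{-1})$. For elements $X,Y$ of an algebra, $[X,Y]=XY-YX$ and $[X,Y]_q=qXY-q^{-1}YX$. Let $\rho=-(q^2-q^{-2})^2$. The algebra $\mathcal O_q$ is defined by generators $\mathcal W_{-k},\mathcal W_{k+1},\mathcal G_{k+1},\tilde{\mathcal G}_{k+1}$ ($k\in\mathbb N$) and the following relations for all $k,\ell\in\mathbb N$: $[\mathcal W_0,\mathcal W_{k+1}]=[\mathcal W_{-k},\mathcal W_1]=(\tilde{\mathcal G}_{k+1}-\mathcal G_{k+1})/(q+q^{-1})$; $[\mathcal W_0,\mathcal G_{k+1}]_q=[\tilde{\mathcal G}_{k+1},\mathcal W_0]_q=\rho\mathcal W_{-k-1}-\rho\mathcal W_{k+1}$; $[\mathcal G_{k+1},\mathcal W_1]_q=[\mathcal W_1,\tilde{\mathcal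 G}_{k+1}]_q=\rho\mathcal W_{k+2}-\rho\mathcal W_{-k}$; $[\mathcal W_{-k},\mathcal W_{-\ell}]=0$, $[\mathcal W_{k+1},\mathcal W_{\ell+1}]=0$; $[\mathcal W_{-k},\mathcal W_{\ell+1}]+[\mathcal W_{k+1},\mathcal W_{-\ell}]=0$; $[\mathcal W_{-k},\mathcal G_{\ell+1}]+[\mathcal G_{k+1},\mathcal W_{-\ell}]=0$; $[\mathcal W_{-k},\tilde{\mathcal G}_{\ell+1}]+[\tilde{\mathcal G}_{k+1},\mathcal W_{-\ell}]=0$; $[\mathcal W_{k+1},\mathcal G_{\ell+1}]+[\mathcal G_{k+1},\mathcal W_{\ell+1}]=0$; $[\mathcal W_{k+1},\tilde{\mathcal G}_{\ell+1}]+[\tilde{\mathcal G}_{k+1},\mathcal W_{\ell+1}]=0$; $[\mathcal G_{k+1},\mathcal G_{\ell+1}]=0$, $[\tilde{\mathcal G}_{k+1},\tilde{\mathcal G}_{\ell+1}]=0$; $[\tilde{\mathcal G}_{k+1},\mathcal G_{\ell+1}]+[\mathcal G_{k+1},\tilde{\mathcal G}_{\ell+1}]=0$. Convention: $\tilde{\mathcal G}_0=-(q-q^{-1})[2]_q^2$. Define $B_\delta=q^{-2}\mathcal W_1\mathcal W_0-\mathcal W_0\mathcal W_1$; $B_{\alpha_0}=\mathcal W_0$, $B_{\delta+\alpha_0}=\mathcal W_1+\frac{q[B_\delta,\mathcal W_0]}{(q-q^{-1})(q^2-q^{-2})}$, $B_{n\delta+\alpha_0}=B_{(n-2)\delta+\alpha_0}+\frac{q[B_\delta,B_{(n-1)\delta+\alpha_0}]}{(q-q^{-1})(q^2-q^{-2})}$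 for $n\ge2$; $B_{\alpha_1}=\mathcal W_1$, $B_{\delta+\alpha_1}=\mathcal W_0-\frac{q[B_\delta,\mathcal W_1]}{(q-q^{-1})(q^2-q^{-2})}$, $B_{n\delta+\alpha_1}=B_{(n-2)\delta+\alpha_1}-\frac{q[B_\delta,B_{(n-1)\delta+\alpha_1}]}{(q-q^{-1})(q^2-q^{-2})}$ for $n\ge2$. For negative integers $k$, set $B_{k\delta+\alpha_0}=B_{(-k-1)\delta+\alpha_1}$ and $B_{k\delta+\alpha_1}=B_{(-k-1)\delta+\alpha_0}$. *)

(* Defs.v *)
From HB Require Import structures.
From mathcomp Require Import all_boot all_order all_algebra.
Set Implicit Arguments. Unset Strict Implicit. Unset Printing Implicit Defensive.
Import Order.TTheory GRing.Theory Num.Theory.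
Local Open Scope ring_scope.

(* Encoding of the generators of O_q in an F-algebra A:
     Wn k = W_{-k},  Wp k = W_{k+1},  G k = G_{k+1},  Gt k = tilde G_{k+1}  (k : nat). *)

Section Oq.
Variables (F : fieldType) (A : algType F) (q : F).

Definition comm (X Y : A) : A := X * Y - Y * X.
Definition qcomm (X Y : A) : A := q *: (X * Y) - q^-1 *: (Y * X).

Definition qint (n : nat) : F := (q ^+ n - q ^- n) / (q - q^-1).

Definition rho : F := - (q ^+ 2 - q ^- 2) ^+ 2.

Record Oq_rels (Wn Wp G Gt : nat -> A) : Prop := {
  rel1a : forall k, comm (Wn 0%N) (Wp k) = (q + q^-1)^-1 *: (Gt k - G k);
  rel1b : forall k, comm (Wn k) (Wp 0%N) = (q + q^-1)^-1 *: (Gt k - G k);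
  rel2a : forall k, qcomm (Wn 0%N) (G k) = rho *: (Wn k.+1 - Wp k);
  rel2b : forall k, qcomm (Gt k) (Wn 0%N) = rho *: (Wn k.+1 - Wp k);
  rel3a : forall k, qcomm (G k) (Wp 0%N) = rho *: (Wp k.+1 - Wn k);
  rel3b : forall k, qcomm (Wp 0%N) (Gt k) = rho *: (Wp k.+1 - Wn k);
  rel4a : forall k l, comm (Wn k) (Wn l) = 0;
  rel4b : forall k l, comm (Wp k) (Wp l) = 0;
  rel5 : forall k l, comm (Wn k) (Wp l) + comm (Wp k) (Wn l) = 0;
  rel6 : forall k l, comm (Wn k) (G l) + comm (G k) (Wn l) = 0;
  rel7 : forall k l, comm (Wn k) (Gt l) + comm (Gt k) (Wn l) = 0;
  rel8 : forall k l, comm (Wp k) (G l) + comm (G k) (Wp l) = 0;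
  rel9 : forall k l, comm (Wp k) (Gt l) + comm (Gt k) (Wp l) = 0;
  rel10a : forall k l, comm (G k) (G l) = 0;
  rel10b : forall k l, comm (Gt k) (Gt l) = 0;
  rel11 : forall k l, comm (Gt k) (G l) + comm (G k) (Gt l) = 0 }.

Variables (Wn Wp G Gt : nat -> A).

Definition W0 : A := Wn 0%N.
Definition W1 : A := Wp 0%N.

(* tilde G_m with the convention tilde G_0 = -(q - q^-1)[2]_q^2 *)
Definition Gtext (m : nat) : A :=
  if m is m'.+1 then Gt m' else (- (q - q^-1) * qint 2 ^+ 2)%:A.

Definition Bdelta : A := q ^- 2 *: (W1 * W0) - W0 * W1.

Definition Bcoef : F := q / ((q - q^-1) * (q ^+ 2 - q ^- 2)).

Fixpoint Bpair (x0 x1 : A) (f : A -> A) (n : nat) : A * A :=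
  if n is n'.+1 then let p := Bpair x0 x1 f n' in (p.2, p.1 + f p.2)
  else (x0, x1).

Definition Ba0 (n : nat) : A :=
  (Bpair W0 (W1 + Bcoef *: comm Bdelta W0) (fun X => Bcoef *: comm Bdelta X) n).1.
Definition Ba1 (n : nat) : A :=
  (Bpair W1 (W0 - Bcoef *: comm Bdelta W1) (fun X => - (Bcoef *: comm Bdelta X)) n).1.

(* integer-indexed versions: B_{k delta+alpha_0} = B_{(-k-1) delta+alpha_1} for k<0 *)
Definition Ba0z (m : int) : A :=
  match m with Posz n => Ba0 n | Negz n => Ba1 n end.
Definition Ba1z (m : int) : A :=
  match m with Posz n => Ba1 n | Negz n => Ba0 n end.

End Oq.

(* Main.v *)
Require Import Defs.
From HB Require Import structures.
From mathcomp Require Import all_boot all_order all_algebra.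
From mathcomp Require Import zify ring.
Import Order.TTheory GRing.Theory Num.Theory.
Local Open Scope ring_scope.
Set Implicit Arguments. Unset Strict Implicit. Unset Printing Implicit Defensive.

Section Generic.
Variables (F : fieldType) (A : algType F).
Implicit Types (X Y Z : A) (a b c : F).

Lemma commN X Y : comm X Y = - comm Y X.
Proof. by rewrite /comm opprB. Qed.
Lemma commDr Z X Y : comm Z (X + Y) = comm Z X + comm Z Y.
Proof. by rewrite /comm mulrDr mulrDl opprD addrACA. Qed.
Lemma commNr Z X : comm Z (- X) = - comm Z X.
Proof. by rewrite /comm mulrN mulNr opprK opprB addrC. Qed.
Lemma commBr Z X Y : comm Z (X - Y) = comm Z X - comm Z Y.
Proof. by rewrite commDr commNr. Qed.
Lemma commZr Z a X : comm Z (a *: X) = a *: comm Z X.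
Proof. by rewrite /comm scalerBr -scalerAr -scalerAl. Qed.
Lemma commMr Z X Y : comm Z (X * Y) = comm Z X * Y + X * comm Z Y.
Proof. by rewrite /comm mulrBl mulrBr !mulrA addrA subrK. Qed.
Lemma comm0r Z : comm Z 0 = 0.
Proof. by rewrite /comm mulr0 mul0r subr0. Qed.
Lemma commrr Z : comm Z Z = 0.
Proof. by rewrite /comm subrr. Qed.
Lemma comm_sumr Z I (r : seq I) (P : pred I) (f : I -> A) :
  comm Z (\sum_(i <- r | P i) f i) = \sum_(i <- r | P i) comm Z (f i).
Proof.
elim/big_rec2: _ => [|i y1 y2 _ <-]; first by rewrite comm0r.
by rewrite commDr.
Qed.
Lemma comm_alg Z a : comm (a%:A) Z = 0.
Proof. by rewrite /comm mulr_algl mulr_algr subrr. Qed.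

(* linear-combination reflection on three atoms *)
Definition lin3 (p : A * A * A) a b c := a *: p.1.1 + b *: p.1.2 + c *: p.2.
Lemma lin3D p a b c a' b' c' :
  lin3 p a b c + lin3 p a' b' c' = lin3 p (a + a') (b + b') (c + c').
Proof. by rewrite /lin3 !scalerDl addrACA (addrACA (a *: _)). Qed.
Lemma lin3N p a b c : - lin3 p a b c = lin3 p (- a) (- b) (- c).
Proof. by rewrite /lin3 !opprD !scaleNr. Qed.
Lemma lin3B p a b c a' b' c' :
  lin3 p a b c - lin3 p a' b' c' = lin3 p (a - a') (b - b') (c - c').
Proof. by rewrite lin3N lin3D. Qed.
Lemma lin3Z p k a b c : k *: lin3 p a b c = lin3 p (k * a) (k * b) (k * c).
Proof. by rewrite /lin3 !scalerDr !scalerA. Qed.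
Lemma lin3_1 p : p.1.1 = lin3 p 1 0 0.
Proof. by rewrite /lin3 scale1r !scale0r !addr0. Qed.
Lemma lin3_2 p : p.1.2 = lin3 p 0 1 0.
Proof. by rewrite /lin3 scale1r !scale0r add0r addr0. Qed.
Lemma lin3_3 p : p.2 = lin3 p 0 0 1.
Proof. by rewrite /lin3 scale1r !scale0r !add0r. Qed.
Lemma lin3E p a b c a' b' c' : a = a' -> b = b' -> c = c' ->
  lin3 p a b c = lin3 p a' b' c'.
Proof. by move=> -> -> ->. Qed.

Lemma Bpair_rec (x0 x1 : A) f n :
  (Bpair x0 x1 f n.+2).1 = (Bpair x0 x1 f n).1 + f (Bpair x0 x1 f n.+1).1.
Proof. by []. Qed.

Lemma Bpair_ind (P : A -> Prop) (x0 x1 : A) f :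
  P x0 -> P x1 -> (forall X, P X -> P (f X)) -> (forall X Y, P X -> P Y -> P (X + Y)) ->
  forall n, P (Bpair x0 x1 f n).1 /\ P (Bpair x0 x1 f n).2.
Proof.
move=> h0 h1 hf hD; elim=> [|n [IH1 IH2]] //=; split => //.
by apply: hD => //; apply: hf.
Qed.

Lemma qcomm_anti q X Y : qcomm q X Y - qcomm q Y X = (q + q^-1) *: comm X Y.
Proof.
rewrite /qcomm /comm.
pose p : A * A * A := (X * Y, Y * X, 0).
have e1 : X * Y = lin3 p 1 0 0 := lin3_1 p.
have e2 : Y * X = lin3 p 0 1 0 := lin3_2 p.
rewrite e1 e2.
rewrite !lin3Z !lin3B lin3Z; apply: lin3E; ring.
Qed.
Lemma subrACA (a b c d : A) : (a - b) - (c - d) = (a - c) - (b - d).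
Proof. by rewrite !opprD addrACA. Qed.
Lemma qcommBr q Z X Y : qcomm q Z (X - Y) = qcomm q Z X - qcomm q Z Y.
Proof. by rewrite /qcomm mulrBr mulrBl !scalerBr subrACA. Qed.
Lemma qcommBl q Z X Y : qcomm q (X - Y) Z = qcomm q X Z - qcomm q Y Z.
Proof. by rewrite /qcomm mulrBr mulrBl !scalerBr subrACA. Qed.
Lemma qcommZr q k X Y : qcomm q X (k *: Y) = k *: qcomm q X Y.
Proof. by rewrite /qcomm scalerBr -scalerAr -scalerAl !scalerA mulrC (mulrC _ k). Qed.
Lemma qcommZl q k X Y : qcomm q (k *: X) Y = k *: qcomm q X Y.
Proof. by rewrite /qcomm scalerBr -scalerAr -scalerAl !scalerA mulrC (mulrC _ k). Qed.
Lemma pascal_sum (Fn : nat -> A) j :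
 \sum_(l < j.+2) 'C(j.+1, l)%:R *: Fn l =
 \sum_(l < j.+1) 'C(j, l)%:R *: Fn l + \sum_(l < j.+1) 'C(j, l)%:R *: Fn l.+1.
Proof.
rewrite big_ord_recl bin0 scale1r.
under eq_bigr => i _ do rewrite lift0 binS natrD scalerDl.
rewrite big_split /= big_ord_recr /= bin_small // scale0r addr0.
rewrite [X in _ = X + _]big_ord_recl bin0 scale1r addrA.
by under [X in _ = _ + X + _]eq_bigr => i _ do rewrite lift0.
Qed.
Lemma sum_factor m (a : 'I_m -> F) (B : 'I_m -> A) (Gm : A) w :
  \sum_(l < m) (a l * w) *: (B l * Gm) = w *: ((\sum_(l < m) a l *: B l) * Gm).
Proof.
rewrite mulr_suml scaler_sumr; apply: eq_bigr => l _.
by rewrite -scalerAl scalerA mulrC.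
Qed.
End Generic.

Section Main.
Variables (F : fieldType) (A : algType F) (q : F).
Hypothesis q0 : q != 0.
Hypothesis q2m1 : q ^+ 2 - 1 != 0.
Hypothesis q2p1 : q ^+ 2 + 1 != 0.
Variables (Wn Wp G Gt : nat -> A).
Hypothesis rels : Oq_rels q Wn Wp G Gt.

Local Notation X := (Wn 0%N).
Local Notation Y := (Wp 0%N).
Local Notation H := (Gt 0%N).
Local Notation Bd := (Bdelta q Wn Wp).
Local Notation c := (Bcoef q).
Local Notation g := (Ba0z q Wn Wp).

Lemma qq2 : q * q - 1 != 0. Proof. by rewrite -expr2. Qed.
Lemma qq2' : q * q + 1 != 0. Proof. by rewrite -expr2. Qed.

Lemma tn0 : q + q^-1 != 0.
Proof.
have -> : q + q^-1 = (q ^+ 2 + 1) / q by field.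
by rewrite mulf_neq0 ?invr_eq0.
Qed.
Lemma mn0 : q - q^-1 != 0.
Proof.
have -> : q - q^-1 = (q ^+ 2 - 1) / q by field.
by rewrite mulf_neq0 ?invr_eq0.
Qed.

Lemma scaleI (k : F) (U V : A) : k != 0 -> k *: U = k *: V -> U = V.
Proof.
by move=> hk /(f_equal (fun Z => k^-1 *: Z)); rewrite !scalerA mulVf // !scale1r.
Qed.

Lemma eG : G 0%N = H - (q + q^-1) *: comm X Y.
Proof.
by rewrite (rel1a rels 0) scalerA mulfV ?tn0 // scale1r opprB addrC subrK.
Qed.

Lemma qXK : qcomm q X (comm X Y) = q *: comm Bd X.
Proof.
rewrite /qcomm /comm /Bdelta /W0 /W1.
rewrite !(mulrBr, mulrBl) -!scalerAl -!scalerAr !mulrA.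
pose p : A * A * A := (X * X * Y, X * Y * X, Y * X * X).
have e1 : X * X * Y = lin3 p 1 0 0 := lin3_1 p.
have e2 : X * Y * X = lin3 p 0 1 0 := lin3_2 p.
have e3 : Y * X * X = lin3 p 0 0 1 := lin3_3 p.
rewrite e1 e2 e3 ?(lin3B, lin3Z, lin3D, lin3N).
by apply: lin3E; field.
Qed.

Lemma qKY : qcomm q (comm X Y) Y = - (q *: comm Bd Y).
Proof.
rewrite /qcomm /comm /Bdelta /W0 /W1.
rewrite !(mulrBr, mulrBl) -!scalerAl -!scalerAr !mulrA.
pose p : A * A * A := (X * Y * Y, Y * X * Y, Y * Y * X).
have e1 : X * Y * Y = lin3 p 1 0 0 := lin3_1 p.
have e2 : Y * X * Y = lin3 p 0 1 0 := lin3_2 p.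
have e3 : Y * Y * X = lin3 p 0 0 1 := lin3_3 p.
rewrite e1 e2 e3 ?(lin3B, lin3Z, lin3D, lin3N).
by apply: lin3E; field.
Qed.

Lemma DX : comm H X = - (q *: comm Bd X).
Proof.
have e : qcomm q X (G 0%N) = qcomm q H X by rewrite (rel2a rels) (rel2b rels).
move: e; rewrite eG qcommBr qcommZr => e.
have : (q + q^-1) *: comm X H = (q + q^-1) *: qcomm q X (comm X Y).
  by rewrite -qcomm_anti -e opprB addrC subrK.
move/scaleI => /(_ tn0) h.
by rewrite commN h qXK.
Qed.

Lemma DY : comm H Y = - (q *: comm Bd Y).
Proof.
have e : qcomm q (G 0%N) Y = qcomm q Y H by rewrite (rel3a rels) (rel3b rels).
move: e; rewrite eG qcommBl qcommZl => e.
have : (q + q^-1) *: comm H Y = (q + q^-1) *: qcomm q (comm X Y) Y.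
  by rewrite -qcomm_anti -e opprB addrC subrK.
move/scaleI => /(_ tn0) h.
by rewrite h qKY.
Qed.

Definition good (Z : A) := comm H Z = - (q *: comm Bd Z).

Lemma goodD U V : good U -> good V -> good (U + V).
Proof. by rewrite /good !commDr => -> ->; rewrite (scalerDr q (comm Bd U)) opprD. Qed.
Lemma goodN U : good U -> good (- U).
Proof. by rewrite /good !commNr => ->; rewrite scalerN. Qed.
Lemma goodB U V : good U -> good V -> good (U - V).
Proof. by move=> hU hV; apply: goodD => //; apply: goodN. Qed.
Lemma goodZ k U : good U -> good (k *: U).
Proof. by rewrite /good !commZr => ->; rewrite scalerN !scalerA mulrC. Qed.
Lemma goodM U V : good U -> good V -> good (U * V).
Proof.
rewrite /good !commMr => -> ->.
by rewrite mulNr mulrN -opprD -scalerAl -scalerAr scalerDr.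
Qed.
Lemma goodX : good X. Proof. exact: DX. Qed.
Lemma goodY : good Y. Proof. exact: DY. Qed.
Lemma goodBd : good Bd.
Proof. by rewrite /Bdelta; apply: goodB; [apply: goodZ|]; apply: goodM; (exact: goodX || exact: goodY). Qed.
Lemma goodC U : good U -> good (comm Bd U).
Proof. by move=> hU; rewrite /comm; apply: goodB; apply: goodM => //; exact: goodBd. Qed.

Lemma good_Ba0 n : good (Ba0 q Wn Wp n).
Proof.
have := @Bpair_ind _ _ good X (Y + c *: comm Bd X) (fun Z => c *: comm Bd Z).
case/(_ _ _ _ _ n) => //.
- exact: goodX.
- by apply: goodD; [exact: goodY| apply: goodZ; apply: goodC; exact: goodX].
- by move=> Z hZ; apply: goodZ; apply: goodC.
- exact: goodD.
Qed.
Lemma good_Ba1 n : good (Ba1 q Wn Wp n).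
Proof.
have := @Bpair_ind _ _ good Y (X - c *: comm Bd Y) (fun Z => - (c *: comm Bd Z)).
case/(_ _ _ _ _ n) => //.
- exact: goodY.
- by apply: goodB; [exact: goodX| apply: goodZ; apply: goodC; exact: goodY].
- by move=> Z hZ; apply: goodN; apply: goodZ; apply: goodC.
- exact: goodD.
Qed.
Lemma good_g m : good (g m).
Proof. by case: m => n /=; [exact: good_Ba0|exact: good_Ba1]. Qed.

Lemma Brec (m : int) : g (m + 1) = g (m - 1) + c *: comm Bd (g m).
Proof.
case: m => [[|n]|[|n]].
- by [].
- have -> : (n.+1%:Z + 1 = n.+2%:Z)%R by lia.
  have -> : (n.+1%:Z - 1 = n%:Z)%R by lia.
  by [].
- by rewrite /= /Ba1 /Ba0 /= subrK.
- have -> : (Negz n.+1 + 1 = Negz n)%R by lia.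
  have -> : (Negz n.+1 - 1 = Negz n.+2)%R by lia.
  rewrite /= /Ba1 Bpair_rec.
  by rewrite subrK.
Qed.

Lemma Ba1zE (m : int) : Ba1z q Wn Wp m = g (- m - 1).
Proof.
case: m => n.
- by have -> : (- n%:Z - 1 = Negz n)%R by lia.
- by have -> : (- Negz n - 1 = n%:Z)%R by lia.
Qed.

Definition V (s : int) (j : nat) : A :=
  \sum_(l < j.+1) ('C(j, l)%:R * q ^ (j%:Z - (2 * l)%:Z)) *: g (j%:Z - (2 * l)%:Z + s).

Lemma Vrec s j : V s j.+1 = q *: V (s + 1) j + q^-1 *: V (s - 1) j.
Proof.
rewrite /V; under eq_bigr => l _ do rewrite -scalerA.
rewrite (pascal_sum (fun l => q ^ ((j.+1)%:Z - (2 * l)%:Z) *: g ((j.+1)%:Z - (2 * l)%:Z + s))) !scaler_sumr; congr (_ + _); apply: eq_bigr => l _.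
- rewrite (_ : (j.+1)%:Z - (2 * l)%:Z = (j%:Z - (2 * l)%:Z) + 1); last by lia.
  rewrite !scalerA; congr (_ *: g _); last by lia.
  by rewrite expfzDr // expr1z; ring.
- rewrite (_ : (j.+1)%:Z - (2 * l.+1)%:Z = (j%:Z - (2 * l)%:Z) - 1); last by lia.
  rewrite !scalerA; congr (_ *: g _); last by lia.
  by rewrite expfzDr // exprN1; ring.
Qed.

Lemma cBg m : c *: comm Bd (g m) = g (m + 1) - g (m - 1).
Proof. by rewrite Brec (addrC (g (m - 1))) addrK. Qed.

Lemma cBV s j : c *: comm Bd (V s j) = V (s + 1) j - V (s - 1) j.
Proof.
rewrite /V comm_sumr scaler_sumr -sumrB; apply: eq_bigr => l _.
rewrite commZr scalerA (mulrC c) -(scalerA _ c) cBg scalerBr.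
by rewrite -!addrA.
Qed.

Lemma I0 j : V 0 j.+1 = (q + q^-1) *: V (-1) j + (q * c) *: comm Bd (V 0 j).
Proof.
rewrite Vrec -scalerA cBV add0r sub0r.
pose p : A * A * A := (V 1 j, V (-1) j, 0).
have e1 : V 1 j = lin3 p 1 0 0 := lin3_1 p.
have e2 : V (-1) j = lin3 p 0 1 0 := lin3_2 p.
rewrite e1 e2 ?(lin3B, lin3Z, lin3D, lin3N).
by apply: lin3E; ring.
Qed.

Lemma I1 j : V (-1) j.+1 = (q + q^-1) *: V 0 j - (q^-1 * c) *: comm Bd (V (-1) j).
Proof.
rewrite Vrec -scalerA cBV addNr.
have -> : (-1 - 1 : int) = -2 by [].
pose p : A * A * A := (V 0 j, V (-2) j, 0).
have e1 : V 0 j = lin3 p 1 0 0 := lin3_1 p.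
have e2 : V (-2) j = lin3 p 0 1 0 := lin3_2 p.
rewrite e1 e2 ?(lin3B, lin3Z, lin3D, lin3N).
by apply: lin3E; ring.
Qed.

Lemma S0E j : \sum_(l < j.+1) ('C(j, l)%:R * q ^ (j%:Z - (2 * l)%:Z)) *: g (j%:Z - (2 * l)%:Z)
  = V 0 j.
Proof. by apply: eq_bigr => l _; rewrite addr0. Qed.

Lemma S1E j : \sum_(l < j.+1) ('C(j, l)%:R * q ^ ((2 * l)%:Z - j%:Z)) *: Ba1z q Wn Wp (j%:Z - (2 * l)%:Z)
  = V (-1) j.
Proof.
rewrite /V (reindex_inj rev_ord_inj) /=; apply: eq_bigr => l _.
have hl : (l <= j)%N by rewrite -ltnS ltn_ord.
rewrite subSS bin_sub // Ba1zE.
congr (_ * q ^ _ *: g _); lia.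
Qed.

Lemma good0 : good 0.
Proof. by rewrite /good !comm0r scaler0 oppr0. Qed.

Lemma good_V s j : good (V s j).
Proof.
rewrite /V; elim/big_ind: _ => //; first exact: good0.
  exact: goodD.
by move=> l _; apply: goodZ; apply: good_g.
Qed.

Local Notation t := (q + q^-1).
Local Notation u := (q + q^-1)^-1.

Lemma qint2 : qint q 2 = q + q^-1.
Proof. rewrite /qint; field; by rewrite q0 /= qq2. Qed.

Lemma q4 : q ^+ 2 - q ^- 2 != 0.
Proof.
have -> : q ^+ 2 - q ^- 2 = (q ^+ 2 - 1) * (q ^+ 2 + 1) / q ^+ 2 by field.
by rewrite !mulf_neq0 // invr_eq0 expf_neq0.
Qed.

Lemma rho_n0 : rho q != 0.
Proof. by rewrite /rho oppr_eq0 expf_neq0 // q4. Qed.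

Lemma commHG m : comm H (Gtext q Gt m) = 0.
Proof.
case: m => [|m] /=; first by rewrite commN comm_alg oppr0.
exact: (rel10b rels).
Qed.

Lemma solve_rho (U V W : A) : rho q *: (U - V) = W -> U = V + (rho q)^-1 *: W.
Proof.
move=> <-; rewrite scalerA mulVf ?rho_n0 // scale1r.
by rewrite addrC subrK.
Qed.

Lemma stepA n : Wn n.+1 = Wp n + (rho q)^-1 *: ((q - q^-1) *: (X * Gt n) + q *: comm H (Wn n)).
Proof.
apply: solve_rho; rewrite -(rel2b rels).
have e7 := rel7 rels n 0.
have eC : comm (Gt n) X = comm H (Wn n).
  by move/eqP: e7; rewrite addrC addr_eq0 => /eqP ->; rewrite (commN H).
have eM : Gt n * X = X * Gt n + comm (Gt n) X.
  by rewrite /comm addrC subrK.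
rewrite /qcomm eM eC.
pose p : A * A * A := (X * Gt n, comm H (Wn n), 0).
have e1 : X * Gt n = lin3 p 1 0 0 := lin3_1 p.
have e2 : comm H (Wn n) = lin3 p 0 1 0 := lin3_2 p.
rewrite e1 e2 ?(lin3B, lin3Z, lin3D, lin3N).
by apply: lin3E; ring.
Qed.

Lemma stepB n : Wp n.+1 = Wn n + (rho q)^-1 *: ((q - q^-1) *: (Y * Gt n) - q^-1 *: comm H (Wp n)).
Proof.
apply: solve_rho; rewrite -(rel3b rels).
have e9 := rel9 rels n 0.
have eC : comm (Gt n) Y = comm H (Wp n).
  by move/eqP: e9; rewrite addrC addr_eq0 => /eqP ->; rewrite (commN H).
have eM : Gt n * Y = Y * Gt n + comm (Gt n) Y.
  by rewrite /comm addrC subrK.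
rewrite /qcomm eM eC.
pose p : A * A * A := (Y * Gt n, comm H (Wp n), 0).
have e1 : Y * Gt n = lin3 p 1 0 0 := lin3_1 p.
have e2 : comm H (Wp n) = lin3 p 0 1 0 := lin3_2 p.
rewrite e1 e2 ?(lin3B, lin3Z, lin3D, lin3N).
by apply: lin3E; ring.
Qed.

Definition R (s : int) n := \sum_(k < n.+1) u ^+ k *: (V s k * Gtext q Gt (n - k)).
Definition T (s : int) n := \sum_(k < n.+1) u ^+ k *: (comm Bd (V s k) * Gtext q Gt (n - k)).

Lemma DR s n : comm H (R s n) = - (q *: T s n).
Proof.
rewrite /R /T comm_sumr scaler_sumr -sumrN; apply: eq_bigr => k _.
rewrite commZr commMr commHG mulr0 addr0 good_V mulNr -scalerAl scalerN !scalerA.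
by rewrite mulrC.
Qed.

Lemma V00 : V 0 0 = X.
Proof. by rewrite /V big_ord1 /= expr0z mulr1 scale1r. Qed.
Lemma V10 : V (-1) 0 = Y.
Proof. by rewrite /V big_ord1 /= expr0z mulr1 scale1r. Qed.

Lemma R0S n : R 0 n.+1 = X * Gt n + (R (-1) n + (u * (q * c)) *: T 0 n).
Proof.
rewrite /R big_ord_recl expr0 scale1r subn0 V00 /=; congr (_ + _).
under eq_bigr => k _ do rewrite ?lift0 ?subSS I0 mulrDl -!scalerAl scalerDr !scalerA.
rewrite big_split /=; congr (_ + _).
  apply: eq_bigr => k _; congr (_ *: _).
  by rewrite exprS mulrAC mulVf ?tn0 // mul1r.
rewrite /T scaler_sumr; apply: eq_bigr => k _; rewrite scalerA; congr (_ *: _).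
by rewrite exprS; ring.
Qed.

Lemma R1S n : R (-1) n.+1 = Y * Gt n + (R 0 n - (u * (q^-1 * c)) *: T (-1) n).
Proof.
rewrite /R big_ord_recl expr0 scale1r subn0 V10 /=; congr (_ + _).
under eq_bigr => k _ do rewrite ?lift0 ?subSS I1 mulrBl -!scalerAl scalerBr !scalerA.
rewrite sumrB /=; congr (_ - _).
  apply: eq_bigr => k _; congr (_ *: _).
  by rewrite exprS mulrAC mulVf ?tn0 // mul1r.
rewrite /T scaler_sumr; apply: eq_bigr => k _; rewrite scalerA; congr (_ *: _).
by rewrite exprS; ring.
Qed.

Lemma h4 : (q * q) ^+ 2 - 1 != 0.
Proof.
rewrite (_ : (q * q) ^+ 2 - 1 = (q * q - 1) * (q * q + 1)); last by ring.
by rewrite mulf_neq0 ?qq2 ?qq2'.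
Qed.
Lemma side : [&& q != 0, (q * q) ^+ 2 - 1 != 0, q * q - 1 != 0, q * q + 1 != 0
    & - ((q * q) ^+ 2 - 1) ^+ 2 != 0].
Proof. by rewrite q0 h4 qq2 qq2' oppr_eq0 expf_neq0 // h4. Qed.

Local Notation kappa := (- ((q - q^-1)^-1 * u ^+ 2)).

Lemma main n : Wn n = kappa *: R 0 n /\ Wp n = kappa *: R (-1) n.
Proof.
elim: n => [|n [IH1 IH2]].
  rewrite /R !big_ord1 /= expr0 scale1r V00 V10 /= !mulr_algr !scalerA.
  by split; rewrite -[LHS]scale1r; congr (_ *: _); rewrite qint2; field; rewrite q0 /= ?qq2 ?qq2'.
split.
- rewrite stepA IH2 IH1 commZr DR R0S.
  pose p : A * A * A := (X * Gt n, R (-1) n, T 0 n).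
  have e1 : X * Gt n = lin3 p 1 0 0 := lin3_1 p.
  have e2 : R (-1) n = lin3 p 0 1 0 := lin3_2 p.
  have e3 : T 0 n = lin3 p 0 0 1 := lin3_3 p.
  rewrite e1 e2 e3 ?(lin3B, lin3Z, lin3D, lin3N).
  apply: lin3E; rewrite /rho /Bcoef; field; exact: side.
- rewrite stepB IH1 IH2 commZr DR R1S.
  pose p : A * A * A := (Y * Gt n, R 0 n, T (-1) n).
  have e1 : Y * Gt n = lin3 p 1 0 0 := lin3_1 p.
  have e2 : R 0 n = lin3 p 0 1 0 := lin3_2 p.
  have e3 : T (-1) n = lin3 p 0 0 1 := lin3_3 p.
  rewrite e1 e2 e3 ?(lin3B, lin3Z, lin3D, lin3N).
  apply: lin3E; rewrite /rho /Bcoef; field; exact: side.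
Qed.
End Main.

Theorem proposition11p7 (F : fieldType) (A : algType F) (q : F)
  (q_neq0 : q != 0) (q_not_root : forall m : nat, (0 < m)%N -> q ^+ m != 1)
  (Wn Wp G Gt : nat -> A) (rels : Oq_rels q Wn Wp G Gt) (n : nat) :
  Wn n = - ((q - q^-1)^-1 *:
     \sum_(k < n.+1) \sum_(l < k.+1)
        (('C(k, l))%:R * q ^ (k%:Z - (2 * l)%:Z) * (qint q 2)^-1 ^+ (k + 2)) *:
          (Ba0z q Wn Wp (k%:Z - (2 * l)%:Z) * Gtext q Gt (n - k)))
  /\
  Wp n = - ((q - q^-1)^-1 *:
     \sum_(k < n.+1) \sum_(l < k.+1)
        (('C(k, l))%:R * q ^ ((2 * l)%:Z - k%:Z) * (qint q 2)^-1 ^+ (k + 2)) *: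
          (Ba1z q Wn Wp (k%:Z - (2 * l)%:Z) * Gtext q Gt (n - k))).
Proof.
have q2m1 : q ^+ 2 - 1 != 0 by rewrite subr_eq0 q_not_root.
have q2p1 : q ^+ 2 + 1 != 0.
  apply/negP => /eqP h.
  have e : q ^+ 2 = -1 by apply/eqP; rewrite -addr_eq0 h.
  have := q_not_root 4%N isT.
  by rewrite (_ : 4 = 2 * 2)%N // exprM e expr2 mulN1r opprK eqxx.
have [h0 h1] := main q_neq0 q2m1 q2p1 rels n.
split.
- rewrite h0 /R -scaleNr !scaler_sumr; apply: eq_bigr => k _.
  rewrite sum_factor S0E !scalerA; congr (_ *: _).
  rewrite qint2 // exprD; field; by rewrite q_neq0 /= -!expr2 q2m1 q2p1.
- rewrite h1 /R -scaleNr !scaler_sumr; apply: eq_bigr => k _.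
  rewrite sum_factor (S1E q_neq0 q2m1 q2p1) !scalerA; congr (_ *: _).
  rewrite qint2 // exprD; field; by rewrite q_neq0 /= -!expr2 q2m1 q2p1.
Qed.
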